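(* Let $G$ be a well-bicovered graph with a clique $C$ and let $H$ be a well-bicovered graph (disjoint from $G$) with a clique $D$, where $|C|=|D|=k$. Let $F$ be the graph formed from the disjoint union of $G$ and $H$ by adding $k$ vertex-disjoint paths, each joining a vertex of $C$ to a vertex of $D$ (so that the paths pair up $C$ and $D$ bijectively), with interior vertices new, such that all the added paths have lengths of the same parity. Then $F$ is well-bicovered.
   Context: All graphs are finite and simple; ''subgraph'' means induced subgraph. A graph is well-bicovered if every vertex-inclusion-maximal induced bipartite subgraph has the same order. *)

(* Defs.v *)
From mathcomp Require Import all_boot.
Set Implicit Arguments. Unset Strict Implicit. Unset Printing Implicit Defensive.

Definition simple_graph (T : finType) (e : rel T) : Prop :=
  symmetric e /\ irreflexive e.

Definition independent (T : finType) (e : rel T) (S : {set T}) : bool :=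
  [forall x in S, forall y in S, ~~ e x y].

Definition bipartite_set (T : finType) (e : rel T) (S : {set T}) : bool :=
  [exists A : {set T}, (A \subset S) && independent e A && independent e (S :\: A)].

Definition well_bicovered (T : finType) (e : rel T) : Prop :=
  forall S1 S2 : {set T},
    maxset (bipartite_set e) S1 -> maxset (bipartite_set e) S2 -> #|S1| = #|S2|.

(* The graph F: vertices of G, vertices of H, and for each i < k the
   (len i).-1 interior vertices of the i-th path.  Path i is
   c i -- (i,0) -- (i,1) -- ... -- (i,(len i).-2) -- d i, of length len i
   (if len i = 1 it is the single edge c i -- d i). *)
Section Glue.
Variables (TG TH : finType) (eG : rel TG) (eH : rel TH) (k : nat)
  (c : 'I_k -> TG) (d : 'I_k -> TH) (len : 'I_k -> nat).

Definition inner_t := {i : 'I_k & 'I_(len i).-1}.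
Definition glue_vert := (TG + TH + inner_t)%type.

Definition glue_edge0 (x y : glue_vert) : bool :=
  match x, y with
  | inl (inl u), inl (inl v) => eG u v
  | inl (inr u), inl (inr v) => eH u v
  | inl (inl u), inl (inr w) => [exists i, (len i == 1) && (u == c i) && (w == d i)]
  | inl (inl u), inr p => (u == c (tag p)) && (val (tagged p) == 0)
  | inl (inr w), inr p => (w == d (tag p)) && ((val (tagged p)).+1 == (len (tag p)).-1)
  | inr p, inr q => (tag p == tag q) && ((val (tagged p)).+1 == val (tagged q))
  | _, _ => false
  end.

Definition glue_edge : rel glue_vert := fun x y => glue_edge0 x y || glue_edge0 y x.

End Glue.
Arguments glue_edge [TG TH] eG eH [k] c d len _ _.

(* Main.v *)
Require Import Defs.
From mathcomp Require Import all_boot.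
Set Implicit Arguments. Unset Strict Implicit. Unset Printing Implicit Defensive.

Definition colorable (T : finType) (e : rel T) (S : {set T}) :=
  exists col : T -> bool, forall x y, x \in S -> y \in S -> e x y -> col x != col y.

Lemma bipP (T : finType) (e : rel T) (S : {set T}) : bipartite_set e S <-> colorable e S.
Proof.
split.
- case/existsP => A /andP[/andP[sAS iA] iD].
  exists (fun x => x \in A) => x y xS yS exy.
  case xA: (x \in A); case yA: (y \in A) => //.
  + by move/forallP: iA => /(_ x) /implyP /(_ xA) /forallP /(_ y) /implyP /(_ yA); rewrite exy.
  + have xD : x \in S :\: A by rewrite inE xA xS.
    have yD : y \in S :\: A by rewrite inE yA yS.
    by move/forallP: iD => /(_ x) /implyP /(_ xD) /forallP /(_ y) /implyP /(_ yD); rewrite exy.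
- case=> col Hc. apply/existsP; exists [set x in S | col x].
  rewrite -andbA; apply/and3P; split.
  + by apply/subsetP => x; rewrite inE => /andP[].
  + apply/forallP => x; apply/implyP => xA; apply/forallP => y; apply/implyP => yA.
    apply/negP => exy; move: xA yA; rewrite !inE => /andP[xS cx] /andP[yS cy].
    by move: (Hc x y xS yS exy); rewrite cx cy.
  + apply/forallP => x; apply/implyP => xA; apply/forallP => y; apply/implyP => yA.
    apply/negP => exy; move: xA yA; rewrite !inE => /andP[cx xS] /andP[cy yS].
    move: (Hc x y xS yS exy); rewrite xS yS /= in cx cy.
    by rewrite (negbTE cx) (negbTE cy).
Qed.

Lemma odd_aux t n : t.+1 = n.-1 -> odd n = odd t.
Proof. by case: n => [|[|n]] //= [->]; rewrite negbK. Qed.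

Section Core.
Variables (TG TH : finType) (eG : rel TG) (eH : rel TH) (k : nat)
  (c : 'I_k -> TG) (d : 'I_k -> TH) (len : 'I_k -> nat).
Hypothesis cliqueC : forall i j : 'I_k, i != j -> eG (c i) (c j).
Hypothesis cliqueD : forall i j : 'I_k, i != j -> eH (d i) (d j).
Hypothesis par : forall i j : 'I_k, odd (len i) = odd (len j).

Local Notation V := (glue_vert TG TH len).
Local Notation F := (glue_edge eG eH c d len).

Definition U (A : {set TG}) (B : {set TH}) : {set V} :=
  [set x : V | match x with inl (inl u) => u \in A | inl (inr w) => w \in B | inr _ => true end].

Definition bcol (A : {set TG}) (cA : TG -> bool) (cH : TH -> bool) (i : 'I_k) : bool :=
  if c i \in A then ~~ cA (c i) else ~~ cH (d i) (+) odd (len i).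

Definition gcol A cA cH (x : V) : bool :=
  match x with
  | inl (inl u) => cA u
  | inl (inr w) => cH w
  | inr p => bcol A cA cH (tag p) (+) odd (val (tagged p))
  end.

Lemma merge A B : colorable eG A -> colorable eH B -> colorable F (U A B).
Proof.
case=> cA HA [cB HB].
pose f := if [pick i | (c i \in A) && (d i \in B)] is Some i
          then cB (d i) (+) cA (c i) (+) odd (len i) else false.
have constr : forall i, c i \in A -> d i \in B -> cB (d i) (+) f = cA (c i) (+) odd (len i).
  move=> j cj dj; rewrite /f; case: pickP => [i /andP[ci di] | /(_ j)]; last by rewrite cj dj.
  case: (eqVneq j i) => [eji | nij]; first by rewrite eji; move: (cB (d i)) (cA (c i)) (odd (len i)) => [] [] [].
  have h1 := HA _ _ cj ci (cliqueC nij).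
  have h2 := HB _ _ dj di (cliqueD nij).
  rewrite (par j i); move: h1 h2.
  by move: (cB (d j)) (cB (d i)) (cA (c j)) (cA (c i)) (odd (len i)) => [] [] [] [] [].
clearbody f.
exists (gcol A cA (fun w => cB w (+) f)).
suff H0 : forall x y, x \in U A B -> y \in U A B -> glue_edge0 eG eH c d x y ->
    gcol A cA (fun w => cB w (+) f) x != gcol A cA (fun w => cB w (+) f) y.
  move=> x y xU yU /orP[] h; first exact: H0.
  by rewrite eq_sym; apply: H0.
move=> [[u|w]|p] [[v|z]|q]; rewrite !inE //=.
- by move=> uA vA h; apply: HA.
- move=> uA zB /existsP[i /andP[/andP[/eqP l1 /eqP eu] /eqP ez]]; subst u z.
  by rewrite constr // l1 /=; case: (cA (c i)).
- move=> uA _ /andP[/eqP eu /eqP e0]; subst u.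
  by rewrite /bcol uA e0 /=; case: (cA (c (tag q))).
- move=> wB zB h; have := HB _ _ wB zB h.
  by move: (cB w) (cB z) (f) => [] [] [].
- move=> wB _ /andP[/eqP ew /eqP e2]; subst w.
  rewrite /bcol (odd_aux e2).
  case cA': (c (tag q) \in A) => /=.
    by rewrite constr // (odd_aux e2); move: (cA (c (tag q))) (odd (val (tagged q))) => [] [].
  by move: (cB (d (tag q))) (f) (odd (val (tagged q))) => [] [] [].
- move=> _ _ /andP[/eqP ept /eqP eq].
  rewrite -eq -ept /=.
  by move: (bcol _ _ _ _) (odd _) => [] [].
Qed.

Definition SG (S : {set V}) := [set u | (inl (inl u) : V) \in S].
Definition SH (S : {set V}) := [set w | (inl (inr w) : V) \in S].

Lemma restrG S : colorable F S -> colorable eG (SG S).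
Proof.
case=> col H; exists (fun u => col (inl (inl u))) => u v; rewrite !inE => uS vS e.
by apply: H => //; rewrite /glue_edge /= e.
Qed.

Lemma restrH S : colorable F S -> colorable eH (SH S).
Proof.
case=> col H; exists (fun u => col (inl (inr u))) => u v; rewrite !inE => uS vS e.
by apply: H => //; rewrite /glue_edge /= e.
Qed.

Lemma maxU S : maxset (bipartite_set F) S -> S = U (SG S) (SH S).
Proof.
move/maxsetP => [bS mS]; apply/esym/mS.
- by apply/bipP/merge; [apply: restrG | apply: restrH]; apply/bipP.
- by apply/subsetP => [[[u|w]|p]] xS; rewrite !inE.
Qed.

Lemma maxG S : maxset (bipartite_set F) S -> maxset (bipartite_set eG) (SG S).
Proof.
move=> mx; have := maxU mx; move/maxsetP: mx => [bS mS] eS.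
apply/maxsetP; split; first by apply/bipP/restrG/bipP.
move=> A' bA' sub.
have e2 : U A' (SH S) = S.
  apply: mS; first by apply/bipP/merge; [apply/bipP | apply: restrH; apply/bipP].
  apply/subsetP => [[[u|w]|p]] xS; rewrite !inE //=.
  by apply: (subsetP sub); rewrite inE.
apply/setP => u; rewrite -e2 !inE.
by [].
Qed.

Lemma maxH S : maxset (bipartite_set F) S -> maxset (bipartite_set eH) (SH S).
Proof.
move=> mx; have := maxU mx; move/maxsetP: mx => [bS mS] eS.
apply/maxsetP; split; first by apply/bipP/restrH/bipP.
move=> B' bB' sub.
have e2 : U (SG S) B' = S.
  apply: mS; first by apply/bipP/merge; [apply: restrG; apply/bipP | apply/bipP].
  apply/subsetP => [[[u|w]|p]] xS; rewrite !inE //=.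
  by apply: (subsetP sub); rewrite inE.
apply/setP => u; rewrite -e2 !inE.
by [].
Qed.

Lemma cardU A B : #|U A B| = #|A| + #|B| + #|{: inner_t len}|.
Proof.
rewrite -!sum1_card !big_sumType.
congr (_ + _ + _); apply: eq_bigl => x; by rewrite !inE.
Qed.

Lemma core : well_bicovered eG -> well_bicovered eH -> well_bicovered F.
Proof.
move=> wG wH S1 S2 m1 m2.
rewrite (maxU m1) (maxU m2) !cardU (wG _ _ (maxG m1) (maxG m2)).
by rewrite (wH _ _ (maxH m1) (maxH m2)).
Qed.

End Core.

Theorem mainTheorem11 (TG TH : finType) (eG : rel TG) (eH : rel TH) (k : nat)
  (c : 'I_k -> TG) (d : 'I_k -> TH) (len : 'I_k -> nat) :
  simple_graph eG -> simple_graph eH ->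
  well_bicovered eG -> well_bicovered eH ->
  injective c -> injective d ->
  (forall i j : 'I_k, i != j -> eG (c i) (c j)) ->
  (forall i j : 'I_k, i != j -> eH (d i) (d j)) ->
  (forall i : 'I_k, 0 < len i) ->
  (forall i j : 'I_k, odd (len i) = odd (len j)) ->
  well_bicovered (glue_edge eG eH c d len).
Proof.
move=> _ _ wG wH _ _ cC cD _ par.
exact: core cC cD par wG wH.
Qed.
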